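(* Let $G=(V,E)$ be a directed multigraph with arc costs $c\in\mathbb{R}^E$ and gains $\gamma\in\mathbb{R}^E_{>0}$, and $u\in V$. Let $\mathcal{D}:=\{x\in\mathbb{R}^E_{\ge0}: x(\delta^+(u))=1,\ \nabla x_v=0\ \forall v\in V\setminus\{u\}\}$, let $f(\delta):=\inf_{x\in\mathcal{D}}\big(c^\top x-\delta(1-\sum_{e\in\delta^-(u)}\gamma_ex_e)\big)$, and consider the problem (F$_u$): $\inf\ c^\top x/(1-\sum_{e\in\delta^-(u)}\gamma_ex_e)$ subject to $1-\sum_{e\in\delta^-(u)}\gamma_ex_e>0$, $x\in\mathcal{D}$. Let $x$ be a feasible solution to (F$_u$) and $\bar\delta:=c^\top x/(1-\sum_{e\in\delta^-(u)}\gamma_ex_e)$. If either $f(\bar\delta)=-\infty$, or $f(\bar\delta)=c^\top\bar x-\bar\delta(1-\sum_{e\in\delta^-(u)}\gamma_e\bar x_e)<0$ for some $\bar x\in\mathcal{D}$ with $1-\sum_{e\in\delta^-(u)}\gamma_e\bar x_e\le0$, then the optimal value of (F$_u$) is $-\infty$.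
   Context: $\delta^+(v)$, $\delta^-(v)$ are the sets of arcs leaving/entering $v$; $x(F):=\sum_{e\in F}x_e$; the net flow at $v$ is $\nabla x_v:=\sum_{e\in\delta^+(v)}x_e-\sum_{e\in\delta^-(v)}\gamma_ex_e$. *)

(* Defs.v *)
From HB Require Import structures.
From mathcomp Require Import all_boot all_order all_algebra.
From mathcomp Require Import boolp classical_sets reals constructive_ereal ereal.
Set Implicit Arguments. Unset Strict Implicit. Unset Printing Implicit Defensive.
Import Order.TTheory GRing.Theory Num.Theory.
Local Open Scope ring_scope.
Local Open Scope classical_set_scope.

(* A directed multigraph is given by finite vertex/arc types V, E and
   tail/head maps; delta^+(v) = {e | tail e = v}, delta^-(v) = {e | head e = v}.
   Vectors in R^E are functions E -> R. *)

Definition net_flow (R : realType) (V E : finType) (tail head : E -> V)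
  (gamma : E -> R) (x : E -> R) (v : V) : R :=
  \sum_(e | tail e == v) x e - \sum_(e | head e == v) gamma e * x e.

Definition in_gain (R : realType) (V E : finType) (head : E -> V)
  (gamma : E -> R) (u : V) (x : E -> R) : R :=
  \sum_(e | head e == u) gamma e * x e.

Definition cost (R : realType) (E : finType) (c x : E -> R) : R :=
  \sum_e c e * x e.

Definition Dset (R : realType) (V E : finType) (tail head : E -> V)
  (gamma : E -> R) (u : V) : set (E -> R) :=
  [set x | (forall e, 0 <= x e) /\ \sum_(e | tail e == u) x e = 1 /\
           (forall v, v != u -> net_flow tail head gamma x v = 0)].

Definition lagr_f (R : realType) (V E : finType) (tail head : E -> V)
  (c gamma : E -> R) (u : V) (delta : R) : \bar R :=
  ereal_inf [set ((cost c x - delta * (1 - in_gain head gamma u x))%:E) |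
             x in Dset tail head gamma u].

Definition Fu_feasible (R : realType) (V E : finType) (tail head : E -> V)
  (gamma : E -> R) (u : V) : set (E -> R) :=
  [set x | Dset tail head gamma u x /\ 0 < 1 - in_gain head gamma u x].

Definition Fu_value (R : realType) (V E : finType) (tail head : E -> V)
  (c gamma : E -> R) (u : V) : \bar R :=
  ereal_inf [set ((cost c x / (1 - in_gain head gamma u x))%:E) |
             x in Fu_feasible tail head gamma u].

(* Main.v *)
Require Import Defs.
From HB Require Import structures.
From mathcomp Require Import all_boot all_order all_algebra.
From mathcomp Require Import boolp classical_sets reals constructive_ereal ereal.
From mathcomp Require Import ring lra.
Import Order.TTheory GRing.Theory Num.Theory.
Local Open Scope ring_scope.

Set Implicit Arguments.
Section Helpers.
Variables (R : realType) (V E : finType) (tail head : E -> V) (c gamma : E -> R) (u : V).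

Lemma sum_lin (P : pred E) (w : E -> R) (a b : R) (x y : E -> R) :
  \sum_(e | P e) w e * (a * x e + b * y e) =
  a * \sum_(e | P e) w e * x e + b * \sum_(e | P e) w e * y e.
Proof.
rewrite !mulr_sumr -big_split /=; apply: eq_bigr => e _; ring.
Qed.

Lemma sum_lin1 (P : pred E) (a b : R) (x y : E -> R) :
  \sum_(e | P e) (a * x e + b * y e) =
  a * \sum_(e | P e) x e + b * \sum_(e | P e) y e.
Proof.
have := sum_lin P (fun _ => 1) a b x y.
by under eq_bigr do rewrite mul1r; under [X in _ = a * X + _]eq_bigr do rewrite mul1r;
   under [X in _ = _ + b * X]eq_bigr do rewrite mul1r.
Qed.

Definition comb (a b : R) (x y : E -> R) := fun e => a * x e + b * y e.

Lemma cost_comb a b x y : cost c (comb a b x y) = a * cost c x + b * cost c y.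
Proof. exact: (sum_lin xpredT c). Qed.

Lemma gain_comb a b x y : in_gain head gamma u (comb a b x y) =
  a * in_gain head gamma u x + b * in_gain head gamma u y.
Proof. exact: sum_lin. Qed.

Lemma Dset_comb a b x y : 0 <= a -> 0 <= b -> a + b = 1 ->
  Dset tail head gamma u x -> Dset tail head gamma u y ->
  Dset tail head gamma u (comb a b x y).
Proof.
move=> a0 b0 ab [x0 [x1 x2]] [y0 [y1 y2]]; split; [|split].
- by move=> e; rewrite /comb addr_ge0 // mulr_ge0.
- by rewrite /comb sum_lin1 x1 y1 !mulr1.
- move=> v hv; rewrite /net_flow /comb sum_lin1 sum_lin.
  have := x2 v hv; have := y2 v hv; rewrite /net_flow => hy hx.
  have -> : forall p q r s : R, a * p + b * q - (a * r + b * s) = a * (p - r) + b * (q - s)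
    by move=> p q r s; ring.
  by rewrite hx hy !mulr0 addr0.
Qed.

Lemma gain_ge0 y : Dset tail head gamma u y -> (forall e, 0 < gamma e) ->
  0 <= in_gain head gamma u y.
Proof.
move=> [y0 _] hg; apply: sumr_ge0 => e _; apply: mulr_ge0 => //; exact: ltW.
Qed.

Lemma to_ninf :
  (forall M : R, exists z, Fu_feasible tail head gamma u z /\
     cost c z / (1 - in_gain head gamma u z) < M) ->
  Fu_value tail head c gamma u = -oo%E.
Proof.
move=> H.
have lb := @ereal_inf_lbound R [set ((cost c x / (1 - in_gain head gamma u x))%:E) |
             x in Fu_feasible tail head gamma u].
rewrite /Fu_value.
case: (ereal_inf _) lb => [r| |] // lb.
- have [z [hz hlt]] := H (r - 1).
  have := lb _ (ex_intro2 _ _ z hz erefl).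
  rewrite lee_fin => h; exfalso; move: hlt h; set q := (_ / _); move=> *; lra.
- have [z [hz hlt]] := H 0.
  by have := lb _ (ex_intro2 _ _ z hz erefl).
Qed.

End Helpers.
Unset Implicit Arguments.
Arguments comb {R E}.

Theorem lemma4p4 (R : realType) (V E : finType) (tail head : E -> V)
  (c gamma : E -> R) (u : V)
  (hgamma : forall e, 0 < gamma e)
  (x : E -> R) (hx : Fu_feasible tail head gamma u x) :
  let dbar := cost c x / (1 - in_gain head gamma u x) in
  (lagr_f tail head c gamma u dbar = -oo%E \/
   exists xbar : E -> R,
     [/\ Dset tail head gamma u xbar,
         1 - in_gain head gamma u xbar <= 0,
         cost c xbar - dbar * (1 - in_gain head gamma u xbar) < 0 &
         lagr_f tail head c gamma u dbar =
           (cost c xbar - dbar * (1 - in_gain head gamma u xbar))%:E]) ->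
  Fu_value tail head c gamma u = -oo%E.
Proof.
move=> dbar H.
case: (hx) => hDx hpos.
set gx := in_gain head gamma u x in hpos dbar H.
set Nx := cost c x in dbar H.
have hNx : Nx = dbar * (1 - gx) by rewrite /dbar divfK // gt_eqF.
have key : forall y, Dset tail head gamma u y -> 1 - in_gain head gamma u y <= 0 ->
    cost c y - dbar * (1 - in_gain head gamma u y) < 0 ->
    forall M, exists z, Fu_feasible tail head gamma u z /\
     cost c z / (1 - in_gain head gamma u z) < M.
  move=> y hy hDy hL M.
  set gy := in_gain head gamma u y in hDy hL *.
  set Ny := cost c y in hL *.
  set L := Ny - dbar * (1 - gy) in hL.
  have hNy : Ny = L + dbar * (1 - gy) by rewrite /L; ring.
  set a := (1 - gx) - (1 - gy).
  have ha : 0 < a by rewrite /a; lra.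
  have ha0 : a != 0 by rewrite gt_eqF.
  set K := - ((1 - gx) * L) / (2 * a).
  have hK : K * (2 * a) = - ((1 - gx) * L) by rewrite /K divfK // mulf_neq0.
  have hKp : 0 < K.
    rewrite /K divr_gt0 //; last by lra.
    by rewrite oppr_gt0 pmulr_rlt0.
  set C := `|dbar - M| + 1.
  have hC : 0 < C by rewrite /C; have := normr_ge0 (dbar - M); lra.
  set t := Num.min ((1 - gx) / 2) (K / C).
  have ht0 : 0 < t.
    by rewrite /t lt_min; apply/andP; split; apply: divr_gt0 => //; lra.
  have ht1 : t <= (1 - gx) / 2 by rewrite /t ge_min lexx.
  have ht2 : t * C <= K by rewrite -ler_pdivlMr // /t ge_min lexx orbT.
  set al := (t - (1 - gy)) / a.
  set be := ((1 - gx) - t) / a.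
  have hal : 0 <= al by rewrite /al divr_ge0 //; lra.
  have hbe : 0 <= be by rewrite /be divr_ge0 //; lra.
  have hab : al + be = 1 by rewrite /al /be /a; field.
  have hbea : be * a = (1 - gx) - t by rewrite /be divfK.
  have hsum : al * (1 - gx) + be * (1 - gy) = t by rewrite /al /be /a; field.
  have hDz : 1 - in_gain head gamma u (comb al be x y) = t.
    by rewrite gain_comb -/gx -/gy -hsum -{1}hab; ring.
  exists (comb al be x y); split.
    split; first exact: Dset_comb.
    by rewrite hDz.
  have hcz : cost c (comb al be x y) = dbar * t + be * L.
    by rewrite cost_comb -/Nx -/Ny hNx hNy -hsum; ring.
  rewrite hDz hcz ltr_pdivrMr //.
  have hbL : be * L <= - K.
    rewrite -(ler_pM2r (_ : 0 < 2 * a)); last by lra.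
    have -> : be * L * (2 * a) = 2 * ((1 - gx) - t) * L by rewrite -hbea; ring.
    rewrite mulNr hK opprK.
    have : 0 <= (1 - gx) - 2 * t by lra.
    move=> h; nra.
  have h3 : (dbar - M) * t <= `|dbar - M| * t.
    by rewrite ler_pM2r // ler_norm.
  move: ht2; rewrite /C => ht2.
  nra.
case: H => [Hinf | [y [hy hDy hL _]]]; last first.
  by apply: to_ninf; exact: key hy hDy hL.
apply: to_ninf => M.
set C := `|M - dbar| + 1.
have : (lagr_f tail head c gamma u dbar < (- C)%:E)%E by rewrite Hinf ltNyr.
move=> /ereal_inf_lt [_ [y hy <-]].
rewrite lte_fin => hL.
have hC : 0 <= `|M - dbar| by exact: normr_ge0.
have hL0 : cost c y - dbar * (1 - in_gain head gamma u y) < 0 by rewrite /C in hL; lra.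
case: (leP (1 - in_gain head gamma u y) 0) => hDy.
  exact: key hy hDy hL0 M.
exists y; split; first by split.
have hg := gain_ge0 hy hgamma.
move: hL hDy hg; rewrite /C.
set gy := in_gain head gamma u y; set Ny := cost c y => hL hDy hg.
rewrite ltr_pdivrMr //.
have h1 : M - dbar <= `|M - dbar| by exact: ler_norm.
have h2 : - (M - dbar) <= `|M - dbar| by rewrite -normrN; exact: ler_norm.
nra.
Qed.
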